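(* Let $\varphi$ be a skew-morphism of a finite group $A$ with power function $\pi:A\to\mathbb{Z}_m$, where $m$ is the order of $\varphi$, let $n$ be a positive multiple of $m$, and let $\Pi:A\to\mathbb{Z}_n$ be an extended power function of $\varphi$. Then for all nonnegative integers $k,k_1,k_2,q,r$: (a) $\sigma_\Pi(xy,k)\equiv\sigma_\Pi(y,\sigma_\Pi(x,k))\pmod n$ for all $x,y\in A$; (b) $\sigma_\Pi(x,k)\equiv0\pmod n$ for all $x\in A$ if and only if $n\mid k$; (c) $\sigma_\Pi(x,qm+r)\equiv q\,\sigma_\Pi(x,m)+\sigma_\Pi(x,r)\pmod n$ for all $x\in A$; (d) $\sigma_\Pi(x,k_1)\equiv\sigma_\Pi(x,k_2)\pmod n$ for all $x\in A$ if and only if $k_1\equiv k_2\pmod n$.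
   Context: A skew-morphism of a finite group $A$ is a permutation $\varphi$ of $A$ with $\varphi(1_A)=1_A$ for which there is a function $\pi:A\to\mathbb{Z}_m$ ($m$ the order of $\varphi$) with $\varphi(xy)=\varphi(x)\varphi^{\pi(x)}(y)$ for all $x,y\in A$. For a positive multiple $n$ of $m$, $\Pi:A\to\mathbb{Z}_n$ is an extended power function of $\varphi$ if (i) $\Pi(x)\equiv\pi(x)\pmod m$ for all $x$; (ii) $\Pi(1_A)\equiv1\pmod n$; (iii) $\Pi(xy)\equiv\sum_{i=1}^{\Pi(x)}\Pi(\varphi^{i-1}(y))\pmod n$ for all $x,y\in A$. The derived function is $\sigma_\Pi(x,0)=0$, $\sigma_\Pi(x,k)=\sum_{i=1}^{k}\Pi(\varphi^{i-1}(x))\in\mathbb{Z}_n$ for $k>0$; in (a) the inner value is used as second argument via any nonnegative integer representative. *)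

(* Defs.v *)
From mathcomp Require Import all_boot all_fingroup.
Unset Printing Implicit Defensive.
Local Open Scope group_scope.

(* A finite group A is the whole finGroupType gT.  The power
   function pi takes values in Z_m, represented by 'I_#[phi]. *)
Definition skew_morphism {gT : finGroupType} (phi : {perm gT})
    (pi : gT -> 'I_#[phi]) : Prop :=
  phi 1 = 1 /\ forall x y : gT, phi (x * y) = phi x * (phi ^+ pi x) y.

(* sigma_Pi(x,k) = sum_{i=1}^k Pi(phi^(i-1)(x)), computed as a natural
   number from the canonical representatives in {0,..,n-1}; it is only
   ever compared modulo n. *)
Definition sigmaPi {gT : finGroupType} (phi : {perm gT}) {n : nat}
    (Pi : gT -> 'I_n) (x : gT) (k : nat) : nat :=
  (\sum_(1 <= i < k.+1) nat_of_ord (Pi ((phi ^+ i.-1) x)))%N.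

Definition ext_power_function {gT : finGroupType} (phi : {perm gT})
    (pi : gT -> 'I_#[phi]) {n : nat} (Pi : gT -> 'I_n) : Prop :=
  [/\ forall x : gT, nat_of_ord (Pi x) = nat_of_ord (pi x) %[mod #[phi]],
      nat_of_ord (Pi 1) = 1 %[mod n]
    & forall x y : gT,
        nat_of_ord (Pi (x * y)) = sigmaPi phi Pi y (Pi x) %[mod n]].

(* Main.v *)
Require Import Defs.
From mathcomp Require Import all_boot all_fingroup cyclic.
Local Open Scope group_scope.
Section S.
Variables (gT : finGroupType) (phi : {perm gT}) (n : nat) (Pi : gT -> 'I_n).
Variables (pi : gT -> 'I_#[phi]) (Hskew : skew_morphism phi pi)
   (n_pos : (0 < n)%N) (Hmn : (#[phi] %| n)%N) (HPi : ext_power_function phi pi Pi).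
Notation sg := (sigmaPi phi Pi).
Notation m := #[phi].
Lemma sg0 x : sg x 0 = 0%N.
Proof. by rewrite /sigmaPi big_geq. Qed.
Lemma sgS x k : sg x k.+1 = (sg x k + Pi ((phi ^+ k) x))%N.
Proof. by rewrite /sigmaPi big_nat_recr. Qed.
Lemma phiD a b x : (phi ^+ (a + b)) x = (phi ^+ b) ((phi ^+ a) x).
Proof. by rewrite expgD permM. Qed.
Lemma phiS k x : (phi ^+ k.+1) x = phi ((phi ^+ k) x).
Proof. by rewrite -addn1 phiD expg1. Qed.
Lemma sgD x a b : sg x (a + b) = (sg x a + sg ((phi ^+ a) x) b)%N.
Proof.
elim: b => [|b IH]; first by rewrite addn0 sg0 addn0.
by rewrite addnS !sgS IH phiD addnA.
Qed.
Lemma phim x : (phi ^+ m) x = x.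
Proof. by rewrite expg_order perm1. Qed.
Lemma phiqm q x : (phi ^+ (q * m)) x = x.
Proof. by rewrite mulnC expgM expg_order expg1n perm1. Qed.
Lemma phi_pi z : phi ^+ (pi z) = phi ^+ (Pi z).
Proof.
case: HPi => H1 _ _.
by rewrite -(expg_mod_order phi (Pi z)) H1 modn_small.
Qed.
Lemma L2 k x y : (phi ^+ k) (x * y) = (phi ^+ k) x * (phi ^+ (sg x k)) y.
Proof.
case: Hskew => _ Hs.
elim: k => [|k IH]; first by rewrite sg0 !expg0 !perm1.
by rewrite !phiS IH Hs sgS phiD phi_pi.
Qed.
Lemma L3 x : (m %| sg x m)%N.
Proof.
rewrite order_dvdn; apply/eqP/permP => y.
have := L2 m x y; rewrite !phim => /mulgI <-.
by rewrite perm1.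
Qed.
Lemma sg_per x a : sg ((phi ^+ a) x) m = sg x m.
Proof.
have := sgD x a m; rewrite addnC sgD phim addnC => /eqP.
by rewrite eqn_add2l => /eqP.
Qed.
Lemma sgqm x q : sg x (q * m) = (q * sg x m)%N.
Proof.
elim: q => [|q IH]; first by rewrite sg0.
by rewrite mulSn sgD phim IH mulSn.
Qed.
Lemma sgn x : sg x n = 0 %[mod n].
Proof.
have -> : sg x n = sg x (n %/ m * m) by rewrite divnK.
rewrite sgqm; case/dvdnP: (L3 x) => c ->.
by rewrite mulnA mulnAC (divnK Hmn) modnMr mod0n.
Qed.
Lemma sg_modn x a : sg x a = sg x (a %% n) %[mod n].
Proof.
rewrite {1}(divn_eq a n) addnC.
elim: (a %/ n) => [|t IH]; first by rewrite mul0n addn0.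
rewrite mulSnr addnA sgD -modnDm IH sgn.
by rewrite mod0n addn0 modn_mod.
Qed.
Lemma La k x y : sg (x * y) k = sg y (sg x k) %[mod n].
Proof.
case: HPi => _ _ H3.
elim: k => [|k IH]; first by rewrite !sg0.
by rewrite sgS L2 sgS sgD -modnDm IH H3 modnDm.
Qed.
Lemma sg_mod_eq x a b : a = b %[mod n] -> sg x a = sg x b %[mod n].
Proof. by move=> H; rewrite (sg_modn x a) H -(sg_modn x b). Qed.
Lemma phi1 k : (phi ^+ k) 1 = 1.
Proof.
case: Hskew => H1 _.
by elim: k => [|k IH]; rewrite ?expg0 ?perm1 // phiS IH H1.
Qed.
Lemma sg1 k : sg 1 k = k %[mod n].
Proof.
case: HPi => _ H2 _.
elim: k => [|k IH]; first by rewrite sg0.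
by rewrite sgS phi1 -modnDm IH H2 modnDm addn1.
Qed.
End S.

Theorem proposition3p2 (gT : finGroupType) (phi : {perm gT})
    (pi : gT -> 'I_#[phi]) (Hskew : skew_morphism phi pi)
    (n : nat) (n_pos : (0 < n)%N) (Hmn : (#[phi] %| n)%N)
    (Pi : gT -> 'I_n) (HPi : ext_power_function phi pi Pi) :
  [/\ (* (a) *)
      (forall (k : nat) (x y : gT) (j : nat),
          j = sigmaPi phi Pi x k %[mod n] ->
          sigmaPi phi Pi (x * y) k = sigmaPi phi Pi y j %[mod n]),
      (* (b) *)
      (forall k : nat,
          (forall x : gT, sigmaPi phi Pi x k = 0 %[mod n]) <-> (n %| k)%N),
      (* (c) *)
      (forall (q r : nat) (x : gT),
          sigmaPi phi Pi x (q * #[phi] + r)%N =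
          (q * sigmaPi phi Pi x #[phi] + sigmaPi phi Pi x r)%N %[mod n])
    & (* (d) *)
      (forall k1 k2 : nat,
          (forall x : gT, sigmaPi phi Pi x k1 = sigmaPi phi Pi x k2 %[mod n])
          <-> k1 = k2 %[mod n])].
Proof.
have La' := La _ _ _ _ _ Hskew HPi.
have sme := sg_mod_eq _ _ _ _ _ Hskew Hmn HPi.
have sg1' := sg1 _ _ _ _ _ Hskew HPi.
split.
- move=> k x y j Hj.
  by rewrite La'; apply: sme; rewrite Hj.
- move=> k; split.
  + by move=> H; have := H 1; rewrite sg1' mod0n => h; rewrite /dvdn h.
  + move=> /dvdnP [c ->] x.
    by rewrite (sme x (c * n)%N 0) ?sg0 // modnMl mod0n.
- by move=> q r x; rewrite sgD sgqm phiqm.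
- move=> k1 k2; split.
  + by move=> H; have := H 1; rewrite !sg1'.
  + by move=> H x; apply: sme.
Qed.
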